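(* Let $m,n$ be positive integers and $j$ a non-negative integer such that $m\leq n$ and $j<n$. Then $$|\mathrm{Hom}^{j}(P_m,P_n)| = \sum_{t=\max\left\{0,\left\lceil\frac{j-(n-m)}{2}\right\rceil\right\}}^{\left\lceil\frac{m+j}{2}\right\rceil-1}\binom{m-1}{t} - \sum_{t=0}^{\left\lfloor\frac{j-(n-m)}{2}\right\rfloor-1}\binom{m-1}{t} -\sum_{t=0}^{\left\lfloor\frac{m-j-1}{2}\right\rfloor-1}\binom{m-1}{t}.$$
   Context: For a positive integer $n$, $P_n$ denotes the path with vertex set $\{0,1,\dots,n-1\}$ and edge set $\{\{i,i+1\} : i=0,\dots,n-2\}$. A homomorphism from a graph $G$ to a graph $H$ is a map $f:V(G)\to V(H)$ with $\{f(x),f(y)\}\in E(H)$ for every edge $\{x,y\}\in E(G)$. $\mathrm{Hom}^{j}(P_m,P_n)$ denotes the set of homomorphisms $f:P_m\to P_n$ with $f(0)=j$. A sum whose upper limit is smaller than its lower limit is zero, and $\binom{a}{b}=0$ if $b<0$ or $b>a$. *)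

(* Defs.v *)
From mathcomp Require Import all_boot all_order all_algebra.
Set Implicit Arguments. Unset Strict Implicit. Unset Printing Implicit Defensive.
Import Order.TTheory GRing.Theory Num.Theory.

Definition path_adj (n : nat) : rel 'I_n :=
  fun x y => (x.+1 == y :> nat) || (y.+1 == x :> nat).

Definition is_hom (m n : nat) (f : {ffun 'I_m -> 'I_n}) : bool :=
  [forall x : 'I_m, forall y : 'I_m, path_adj x y ==> path_adj (f x) (f y)].

Definition Hom_j (m n j : nat) : {set {ffun 'I_m -> 'I_n}} :=
  [set f | is_hom f & [forall x : 'I_m, (val x == 0) ==> (val (f x) == j)]].

Definition floor2 (x : int) : int := (x %/ 2)%Z.
Definition ceil2 (x : int) : int := - ((- x) %/ 2)%Z.

(* \sum_{t = lo}^{hi} F t over integers t >= 0 (all lower limits used are >= 0);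
   empty when hi < lo. *)
Definition isum (lo hi : int) (F : nat -> int) : int :=
  (\sum_(0 <= t < `|hi|.+1 | (lo <= t%:Z)%R && (t%:Z <= hi)%R) F t)%R.

(* Main.v *)
Require Import Defs.
From mathcomp Require Import all_boot all_order all_algebra.
From mathcomp Require Import zify.
Import Order.TTheory GRing.Theory Num.Theory.
Set Implicit Arguments. Unset Strict Implicit. Unset Printing Implicit Defensive.

Definition tl k n (f : {ffun 'I_k.+2 -> 'I_n}) : {ffun 'I_k.+1 -> 'I_n} :=
  [ffun i => f (lift ord0 i)].
Definition cns k n (xo : 'I_n) (g : {ffun 'I_k.+1 -> 'I_n}) : {ffun 'I_k.+2 -> 'I_n} :=
  [ffun i => if unlift ord0 i is Some i' then g i' else xo].

Lemma HomP m n j f : reflect (is_hom f /\ forall i : 'I_m, val i = 0%N -> val (f i) = j)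
  (f \in Hom_j m n j).
Proof.
rewrite inE; apply: (iffP andP) => [[H1 /forallP H2]|[H1 H2]]; split => //.
  by move=> i /eqP Hi; apply/eqP/(implyP (H2 i) Hi).
by apply/forallP => i; apply/implyP => /eqP Hi; apply/eqP; apply: H2.
Qed.

Lemma is_homP m n (f : {ffun 'I_m -> 'I_n}) :
  reflect (forall a b, path_adj a b -> path_adj (f a) (f b)) (is_hom f).
Proof.
apply: (iffP forallP) => [H a b|H a]; first exact/implyP/(forallP (H a)).
by apply/forallP => b; apply/implyP; apply: H.
Qed.

Lemma adj_lift k (a b : 'I_k.+1) :
  path_adj (lift ord0 a) (lift ord0 b) = path_adj a b.
Proof. by rewrite /path_adj !lift0. Qed.

Lemma tl_hom k n x y f : f \in Hom_j k.+2 n x -> val (f (lift ord0 ord0)) = y ->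
  tl f \in Hom_j k.+1 n y.
Proof.
move=> /HomP [/is_homP Hh _] Hy; apply/HomP; split.
  by apply/is_homP => a b hab; rewrite !ffunE; apply: Hh; rewrite adj_lift.
move=> i hi; rewrite ffunE -Hy; do 3 f_equal; exact: val_inj.
Qed.

Lemma cns_hom k n x y (xo : 'I_n) g : val xo = x -> g \in Hom_j k.+1 n y ->
  (x.+1 == y) || (y.+1 == x) ->
  (cns xo g \in Hom_j k.+2 n x) && (val (cns xo g (lift ord0 ord0)) == y).
Proof.
move=> hxo /HomP [/is_homP Hh H0] hxy; apply/andP; split; last first.
  by rewrite ffunE liftK H0.
apply/HomP; split; last first.
  move=> i hi; rewrite ffunE; case: unliftP => [i'|] // E.
  by move: hi; rewrite E /= /bump; lia.
apply/is_homP => a b; rewrite !ffunE.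
case: (unliftP ord0 a) => [a'|] ->; case: (unliftP ord0 b) => [b'|] ->.
- by rewrite adj_lift; apply: Hh.
  rewrite /path_adj lift0 /= => /eqP Ea.
  have E : a' = ord0 by apply: val_inj; rewrite /=; lia.
  rewrite E H0 // hxo; move: hxy; rewrite /path_adj; lia.
- rewrite /path_adj lift0 /= => /eqP Eb.
  have E : b' = ord0 by apply: val_inj; rewrite /=; lia.
  rewrite E H0 // hxo; move: hxy; rewrite /path_adj; lia.
- by rewrite /path_adj.
Qed.

Definition S k n x y := [set f in Hom_j k.+2 n x | val (f (lift ord0 ord0)) == y].

Lemma card_S k n x y (hx : (x < n)%N) (hxy : (x.+1 == y) || (y.+1 == x)) :
  #|S k n x y| = #|Hom_j k.+1 n y|.
Proof.
rewrite -(card_in_imset (f := @tl k n)).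
  congr #|pred_of_set _|; apply/setP => g; apply/imsetP/idP.
    by case=> f /setIdP [Hf /eqP Hy] ->; apply: tl_hom Hf Hy.
  move=> Hg; exists (cns (Ordinal hx) g).
    by rewrite inE; apply: cns_hom.
  by apply/ffunP => i; rewrite !ffunE liftK.
move=> f1 f2 /setIdP[/HomP[_ H1] _] /setIdP[/HomP[_ H2] _] E.
apply/ffunP => i; case: (unliftP ord0 i) => [i'|] ->.
  by move/ffunP: E => /(_ i'); rewrite !ffunE.
by apply: val_inj; rewrite H1 // H2.
Qed.

Lemma card_rec k n x : (x < n)%N -> #|Hom_j k.+2 n x| =
  ((if x is x'.+1 then #|Hom_j k.+1 n x'| else 0) + #|Hom_j k.+1 n x.+1|)%N.
Proof.
move=> hx.
have Hsplit f : f \in Hom_j k.+2 n x ->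
    (val (f (lift ord0 ord0))).+1 = x \/ val (f (lift ord0 ord0)) = x.+1.
  move=> /HomP [/is_homP Hh H0].
  have := Hh ord0 (lift ord0 ord0); rewrite /path_adj lift0 /= H0 // => /(_ isT).
  lia.
case: x hx Hsplit => [|x] hx Hsplit.
  rewrite (_ : Hom_j k.+2 n 0 = S k n 0 1) ?card_S //.
  apply/setP => f; apply/idP/setIdP => [Hf|[]//]; split => //.
  by case: (Hsplit f Hf) => // ->.
rewrite (_ : Hom_j k.+2 n x.+1 = S k n x.+1 x :|: S k n x.+1 x.+2).
  rewrite cardsU (_ : _ :&: _ = set0) ?cards0 ?subn0 ?card_S //;
    try by rewrite /= eqxx ?orbT.
  apply/setP => f; rewrite !inE; apply/negbTE; apply/negP.
  move=> /andP[/andP[_ /eqP e1] /andP[_ /eqP e2]]; lia.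
apply/setP => f; rewrite in_setU; apply/idP/orP => [Hf|[]/setIdP[]//].
by case: (Hsplit f Hf) => E; [left|right]; apply/setIdP; split => //; apply/eqP; lia.
Qed.

Lemma card_base n x : (x < n)%N -> #|Hom_j 1 n x| = 1%N.
Proof.
move=> hx; rewrite (_ : Hom_j 1 n x = [set [ffun _ => Ordinal hx]]) ?cards1 //.
apply/setP => f; rewrite in_set1; apply/HomP/eqP.
  move=> [_ H]; apply/ffunP => i; rewrite ffunE; apply: val_inj.
  by rewrite /= H // (ord1 i).
move=> ->; split.
  by apply/is_homP => a b; rewrite (ord1 a) (ord1 b) /path_adj.
by move=> i _; rewrite ffunE.
Qed.

Lemma card_empty k n x : (n <= x)%N -> Hom_j k.+1 n x = set0.
Proof.
move=> hx; apply/setP => f; rewrite in_set0; apply/negbTE/negP => /HomP [_ H].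
have h1 := H ord0 erefl; have h2 := ltn_ord (f ord0). move: h1 h2. rewrite /=. move=> -> h2. by rewrite ltnNge hx in h2.
Qed.
Local Open Scope ring_scope.

Definition Nn L k := (\sum_(0 <= t < k) 'C(L, t))%N.

Lemma Nn_pascal L k : Nn L.+1 k.+1 = (Nn L k.+1 + Nn L k)%N.
Proof.
rewrite /Nn big_nat_recl // [X in (_ = X + _)%N]big_nat_recl // !bin0 -addnA.
congr (_ + _)%N; rewrite -big_split /=; apply: eq_bigr => i _; exact: binS.
Qed.

Lemma Nn_big L k : (L < k)%N -> Nn L k = Nn L L.+1.
Proof.
move=> hk; rewrite /Nn (big_cat_nat (n := L.+1)) //=.
have -> : (\sum_(L.+1 <= i < k) 'C(L, i))%N = 0%N.
  rewrite big_nat_cond; apply: big1 => i /andP[/andP[hi _] _]; exact: bin_small.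
by rewrite addn0.
Qed.

Lemma Nn_sym L k : (k <= L.+1)%N -> (Nn L k + Nn L (L.+1 - k) = Nn L L.+1)%N.
Proof.
move=> hk; rewrite /Nn [RHS](big_cat_nat (n := k)) //=; congr (_ + _)%N.
rewrite -{2}[k]add0n big_addn big_nat_rev /=.
apply: congr_big_nat => // i /andP[_ hi].
rewrite add0n -bin_sub; last by lia.
congr 'C(_, _); lia.
Qed.

Definition NZ L (k : int) : int := if (0 <= k) then (Nn L `|k|%N)%:Z else 0.

Lemma NZ_le0 L k : k <= 0 -> NZ L k = 0.
Proof.
rewrite /NZ; case: ifP => // h1 h2; have -> : `|k|%N = 0%N by lia.
by rewrite /Nn big_geq.
Qed.

Lemma NZ_pascal L k : NZ L.+1 (k + 1) = NZ L (k + 1) + NZ L k.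
Proof.
case: (ltrP k 0) => hk.
  by rewrite !NZ_le0 //; lia.
rewrite /NZ !ifT; try lia.
have -> : `|(k + 1)%R|%N = (`|k|%N).+1 by lia.
by rewrite Nn_pascal PoszD.
Qed.

Lemma NZ_big L k : L%:Z < k -> NZ L k = (Nn L L.+1)%:Z.
Proof. by move=> h; rewrite /NZ ifT ?Nn_big //; lia. Qed.

Lemma NZ_sym L k : 0 <= k -> k <= L%:Z + 1 -> NZ L k + NZ L (L%:Z + 1 - k) = (Nn L L.+1)%:Z.
Proof.
move=> h1 h2; rewrite /NZ !ifT; try lia.
have -> : `|(L%:Z + 1 - k)%R|%N = (L.+1 - `|k|)%N by lia.
by rewrite -PoszD Nn_sym //; lia.
Qed.

Lemma NZ0 k : 1 <= k -> NZ 0 k = 1.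
Proof.
move=> h; rewrite /NZ ifT; last by lia.
have [k' ->] : exists k', `|k|%N = k'.+1 by exists (`|k|.-1)%N; lia.
by rewrite /Nn big_nat_recl // bin0 big1.
Qed.

Lemma NZ_eq L a b : a = b -> NZ L a = NZ L b.
Proof. by move->. Qed.

Definition F n L (x : int) : int :=
  NZ L (ceil2 (L%:Z + 1 + x)) - NZ L (ceil2 (x - n%:Z + L%:Z + 1))
  - NZ L (floor2 (x - n%:Z + L%:Z + 1)) - NZ L (floor2 (L%:Z - x)).

Lemma F_rec n L x : F n L.+1 x = F n L (x - 1) + F n L (x + 1).
Proof.
rewrite /F.
have E1 : NZ L.+1 (ceil2 (L.+1%:Z + 1 + x)) =
   NZ L (ceil2 (L%:Z + 1 + (x + 1))) + NZ L (ceil2 (L%:Z + 1 + (x - 1))).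
  rewrite (NZ_eq _ (_ : ceil2 (L.+1%:Z + 1 + x) = ceil2 (L%:Z + 1 + (x - 1)) + 1)); last by rewrite /ceil2; lia.
  rewrite (NZ_eq _ (_ : ceil2 (L%:Z + 1 + (x + 1)) = ceil2 (L%:Z + 1 + (x - 1)) + 1)); last by rewrite /ceil2; lia.
  exact: NZ_pascal.
have E2 : NZ L.+1 (ceil2 (x - n%:Z + L.+1%:Z + 1)) =
   NZ L (ceil2 ((x + 1) - n%:Z + L%:Z + 1)) + NZ L (ceil2 ((x - 1) - n%:Z + L%:Z + 1)).
  rewrite (NZ_eq _ (_ : ceil2 (x - n%:Z + L.+1%:Z + 1) = ceil2 ((x - 1) - n%:Z + L%:Z + 1) + 1)); last by rewrite /ceil2; lia.
  rewrite (NZ_eq _ (_ : ceil2 ((x + 1) - n%:Z + L%:Z + 1) = ceil2 ((x - 1) - n%:Z + L%:Z + 1) + 1)); last by rewrite /ceil2; lia.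
  exact: NZ_pascal.
have E3 : NZ L.+1 (floor2 (x - n%:Z + L.+1%:Z + 1)) =
   NZ L (floor2 ((x + 1) - n%:Z + L%:Z + 1)) + NZ L (floor2 ((x - 1) - n%:Z + L%:Z + 1)).
  rewrite (NZ_eq _ (_ : floor2 (x - n%:Z + L.+1%:Z + 1) = floor2 ((x - 1) - n%:Z + L%:Z + 1) + 1)); last by rewrite /floor2; lia.
  rewrite (NZ_eq _ (_ : floor2 ((x + 1) - n%:Z + L%:Z + 1) = floor2 ((x - 1) - n%:Z + L%:Z + 1) + 1)); last by rewrite /floor2; lia.
  exact: NZ_pascal.
have E4 : NZ L.+1 (floor2 (L.+1%:Z - x)) =
   NZ L (floor2 (L%:Z - (x - 1))) + NZ L (floor2 (L%:Z - (x + 1))).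
  rewrite (NZ_eq _ (_ : floor2 (L.+1%:Z - x) = floor2 (L%:Z - (x + 1)) + 1)); last by rewrite /floor2; lia.
  rewrite (NZ_eq _ (_ : floor2 (L%:Z - (x - 1)) = floor2 (L%:Z - (x + 1)) + 1)); last by rewrite /floor2; lia.
  exact: NZ_pascal.
rewrite E1 E2 E3 E4; lia.
Qed.

Lemma F_m1 n L : (L < n)%N -> F n L (-1) = 0.
Proof.
move=> hL; rewrite /F.
rewrite (@NZ_le0 L (ceil2 (-1 - n%:Z + L%:Z + 1))); last by rewrite /ceil2; lia.
rewrite (@NZ_le0 L (floor2 (-1 - n%:Z + L%:Z + 1))); last by rewrite /floor2; lia.
rewrite (NZ_eq _ (_ : ceil2 (L%:Z + 1 + -1) = floor2 (L%:Z - -1))); last by rewrite /ceil2 /floor2; lia.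
by rewrite !subr0 subrr.
Qed.

Lemma F_n n L : (L < n)%N -> F n L n%:Z = 0.
Proof.
move=> hL; rewrite /F.
rewrite (@NZ_le0 L (floor2 (L%:Z - n%:Z))); last by rewrite /floor2; lia.
rewrite (@NZ_big L (ceil2 (L%:Z + 1 + n%:Z))); last by rewrite /ceil2; lia.
rewrite (NZ_eq _ (_ : floor2 (n%:Z - n%:Z + L%:Z + 1) = L%:Z + 1 - ceil2 (n%:Z - n%:Z + L%:Z + 1))); last by rewrite /ceil2 /floor2; lia.
have h := @NZ_sym L (ceil2 (n%:Z - n%:Z + L%:Z + 1)) ltac:(rewrite /ceil2; lia) ltac:(rewrite /ceil2; lia).
rewrite -h; set a := NZ L _; set b := NZ L _; lia.
Qed.

Lemma F_0 n (x : nat) : (x < n)%N -> F n 0 x%:Z = 1.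
Proof.
move=> hx; rewrite /F.
rewrite (@NZ_le0 0 (floor2 (0%:Z - x%:Z))); last by rewrite /floor2; lia.
rewrite (@NZ_le0 0 (floor2 (x%:Z - n%:Z + 0%:Z + 1))); last by rewrite /floor2; lia.
rewrite (@NZ_le0 0 (ceil2 (x%:Z - n%:Z + 0%:Z + 1))); last by rewrite /ceil2; lia.
rewrite NZ0; last by rewrite /ceil2; lia.
lia.
Qed.

Lemma main n L : (L < n)%N -> forall x, (x < n)%N -> (#|Hom_j L.+1 n x|)%:Z = F n L x%:Z.
Proof.
elim: L => [_ x hx|L IH hL x hx]; first by rewrite card_base // F_0.
rewrite card_rec // F_rec PoszD; congr (_ + _).
  case: x hx => [|x] hx /=.
    by rewrite sub0r F_m1 // ltnW.
  have -> : (x.+1)%:Z - 1 = x%:Z by lia.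
  by rewrite IH // ltnW.
case: (ltnP x.+1 n) => h.
  have -> : x%:Z + 1 = (x.+1)%:Z by lia.
  by rewrite IH // ltnW.
rewrite card_empty; last by lia.
rewrite cards0 (_ : x%:Z + 1 = n%:Z); last by lia.
by rewrite F_n // ltnW.
Qed.

Lemma sum_filter_nat (B l h : nat) (P : pred nat) (G : nat -> int) :
  (l <= h)%N -> (h <= B)%N -> (forall t, (t < B)%N -> P t = (l <= t < h)%N) ->
  \sum_(0 <= t < B | P t) G t = \sum_(l <= t < h) G t.
Proof.
move=> lh hB HP.
rewrite (big_cat_nat (n := l)) //=; last by lia.
rewrite (big_cat_nat (n := h) (m := l)) //=.
have -> : \sum_(0 <= i < l | P i) G i = 0.
  rewrite big_nat_cond; apply: big1 => t /andP[/andP[_ ht]]; rewrite HP; [lia|lia].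
have -> : \sum_(h <= i < B | P i) G i = 0.
  rewrite big_nat_cond; apply: big1 => t /andP[/andP[ht1 ht2]]; rewrite HP; [lia|lia].
rewrite add0r addr0 big_nat_cond [RHS]big_nat_cond; apply: eq_bigl => t.
case: (boolP ((l <= t) && (t < h))%N) => //= /andP[h1 h2]; rewrite HP; lia.
Qed.

Lemma isum_N L lo hi : 0 <= lo -> lo <= hi + 1 ->
  isum lo hi (fun t => ('C(L, t))%:Z) = NZ L (hi + 1) - NZ L lo.
Proof.
move=> h1 h2; rewrite /isum (@sum_filter_nat _ `|lo|%N `|(hi + 1)%R|%N); try lia.
  rewrite /NZ !ifT; try lia.
  have -> : (Nn L `|(hi+1)%R|)%:Z = (Nn L `|lo|)%:Z + \sum_(`|lo| <= t < `|(hi+1)%R|) ('C(L,t))%:Z.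
    rewrite /Nn (big_cat_nat (n := `|lo|%N)) /= ?PoszD; try lia.
    congr (_ + _); rewrite -natz natr_sum; apply: eq_bigr => t _; by rewrite natz.
  by rewrite addrAC subrr add0r.
Qed.

Lemma isum0 L hi : isum 0 hi (fun t => ('C(L, t))%:Z) = NZ L (hi + 1).
Proof.
case: (ltrP hi 0) => h.
  rewrite NZ_le0; last by lia.
  rewrite /isum big_nat_cond big1 // => t /andP[_ /andP[_ ht]]; lia.
rewrite isum_N //; last by lia.
by rewrite (@NZ_le0 L 0) // subr0.
Qed.

Lemma isum_max L c hi : c <= hi + 1 -> 0 <= hi + 1 ->
  isum (Num.max 0 c) hi (fun t => ('C(L, t))%:Z) = NZ L (hi + 1) - NZ L c.
Proof.
move=> h1 h2; rewrite /Num.max; case: ifP => h.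
  by rewrite isum_N //; lia.
move/negbT: h => h.
rewrite isum_N //; try lia.
by rewrite (@NZ_le0 L 0) // (@NZ_le0 L c) //; lia.
Qed.

Theorem corollary1 (m n j : nat) (hm : (0 < m)%N) (hn : (0 < n)%N)
    (hmn : (m <= n)%N) (hj : (j < n)%N) :
  (#|Hom_j m n j|)%:Z =
      isum (Num.max 0 (ceil2 (j%:Z - (n%:Z - m%:Z)))) (ceil2 (m%:Z + j%:Z) - 1)
           (fun t => ('C(m.-1, t))%:Z)
    - isum 0 (floor2 (j%:Z - (n%:Z - m%:Z)) - 1) (fun t => ('C(m.-1, t))%:Z)
    - isum 0 (floor2 (m%:Z - j%:Z - 1) - 1) (fun t => ('C(m.-1, t))%:Z).
Proof.
case: m hm hmn => // L _ hLn /=.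
rewrite main //.
rewrite isum_max; [|rewrite /ceil2; lia|rewrite /ceil2; lia].
rewrite !isum0 /F.
rewrite (NZ_eq L (_ : ceil2 (L.+1%:Z + j%:Z) - 1 + 1 = ceil2 (L%:Z + 1 + j%:Z))); last by rewrite /ceil2; lia.
rewrite (NZ_eq L (_ : ceil2 (j%:Z - (n%:Z - L.+1%:Z)) = ceil2 (j%:Z - n%:Z + L%:Z + 1))); last by rewrite /ceil2; lia.
rewrite (NZ_eq L (_ : floor2 (j%:Z - (n%:Z - L.+1%:Z)) - 1 + 1 = floor2 (j%:Z - n%:Z + L%:Z + 1))); last by rewrite /floor2; lia.
rewrite (NZ_eq L (_ : floor2 (L.+1%:Z - j%:Z - 1) - 1 + 1 = floor2 (L%:Z - j%:Z))); last by rewrite /floor2; lia.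
by [].
Qed.
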